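(* Consider any $(M,N)$-VLF code over a DMC $P_{Y|X}$ with finite alphabets. Then for every $n\ge0$, almost surely, $$\mathbb{E}\big[\ln\mathcal{H}(W|Y^n)-\ln\mathcal{H}(W|Y^{n+1})\,\big|\,Y^n\big]\le B.$$
   Context: $B=\max_{x,x'\in\mathcal{X}}D(P_{Y|X}(\cdot|x)\|P_{Y|X}(\cdot|x'))$ (possibly $+\infty$). An $(M,N)$-VLF code has a message $W$ uniform on $\{1,\dots,M\}$ and encoders $X_n=f_n(W,Y^{n-1})$, where conditionally on $(W,X^n,Y^{n-1})$ the output $Y_n$ has law $P_{Y|X}(\cdot|X_n)$ (feedback of past outputs to the encoder). The random conditional entropy is $\mathcal{H}(W|Y^n)=-\sum_{w=1}^M\mathbb{P}(W=w|Y^n)\ln\mathbb{P}(W=w|Y^n)$ (natural logarithms). *)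

(* Defs.v *)
From Stdlib Require Import Reals List.
Open Scope R_scope.

(* Alphabets are encoded as {0,...,k-1} (k : nat); messages W in {0,...,M-1}. *)

Definition sumn (k : nat) (f : nat -> R) : R :=
  fold_right Rplus 0 (map f (seq 0 k)).
Definition prodn (k : nat) (f : nat -> R) : R :=
  fold_right Rmult 1 (map f (seq 0 k)).

(* P : nX inputs, nY outputs, P x y = P_{Y|X}(y|x) is a stochastic matrix *)
Definition is_DMC (nX nY : nat) (P : nat -> nat -> R) : Prop :=
  (0 < nX)%nat /\
  (forall x y, (x < nX)%nat -> (y < nY)%nat -> 0 <= P x y) /\
  (forall x, (x < nX)%nat -> sumn nY (P x) = 1).

(* KL divergence D(P(.|x) || P(.|x')) in nats, with 0 ln(0/q) = 0.
   It is finite iff kl_finite holds (absolute continuity). *)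
Definition kl_finite (nY : nat) (P : nat -> nat -> R) (x x' : nat) : Prop :=
  forall y, (y < nY)%nat -> P x' y = 0 -> P x y = 0.
Definition kl (nY : nat) (P : nat -> nat -> R) (x x' : nat) : R :=
  sumn nY (fun y => if Req_EM_T (P x y) 0 then 0
                    else P x y * ln (P x y / P x' y)).

(* Feedback encoder: enc w ys = X_{i+1} = f_{i+1}(w, Y^i) where ys = Y^i
   (so the time index i+1 = length ys + 1 is carried by ys). *)
Definition valid_encoder (M nX : nat) (enc : nat -> list nat -> nat) : Prop :=
  forall w ys, (w < M)%nat -> (enc w ys < nX)%nat.

Definition valid_outputs (nY : nat) (ys : list nat) : Prop :=
  forall y, In y ys -> (y < nY)%nat.

(* P(W = w, Y^n = ys), W uniform on M messages *)
Definition pjoint (M : nat) (P : nat -> nat -> R) (enc : nat -> list nat -> nat)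
  (w : nat) (ys : list nat) : R :=
  / INR M * prodn (length ys)
              (fun i => P (enc w (firstn i ys)) (nth i ys 0%nat)).

Definition pY (M : nat) P enc (ys : list nat) : R :=
  sumn M (fun w => pjoint M P enc w ys).

Definition post (M : nat) P enc (w : nat) (ys : list nat) : R :=
  pjoint M P enc w ys / pY M P enc ys.

Definition condH (M : nat) P enc (ys : list nat) : R :=
  - sumn M (fun w => let p := post M P enc w ys in
                     if Req_EM_T p 0 then 0 else p * ln p).

(* Main.v *)
Require Import Defs.
From Stdlib Require Import Reals List Lra Lia.
From Coquelicot Require Import Coquelicot.
Open Scope R_scope.

Lemma ln_le_sub1 x : 0 < x -> ln x <= x - 1.
Proof. intros Hx. pose proof (exp_ineq1_le (ln x)). rewrite exp_ln in H; lra. Qed.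

Lemma ln_ge_1minv x : 0 < x -> 1 - / x <= ln x.
Proof. intros Hx. pose proof (ln_le_sub1 (/ x) (Rinv_0_lt_compat _ Hx)).
  rewrite ln_Rinv in H; lra. Qed.

Lemma mono (f df : R -> R) a b : a <= b ->
  (forall x, a <= x <= b -> is_derive f x (df x)) ->
  (forall x, a <= x <= b -> 0 <= df x) -> f a <= f b.
Proof.
  intros Hab Hd Hp.
  destruct (MVT_gen f a b df) as [c [Hc Heq]].
  - intros x Hx. rewrite Rmin_left in Hx by lra. rewrite Rmax_right in Hx by lra.
    apply Hd; lra.
  - intros x Hx. rewrite Rmin_left in Hx by lra. rewrite Rmax_right in Hx by lra.
    apply continuity_pt_filterlim. apply (ex_derive_continuous (K:=R_AbsRing) (V:=R_NormedModule)).
    exists (df x). apply Hd; lra.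
  - rewrite Rmin_left in Hc by lra. rewrite Rmax_right in Hc by lra.
    assert (0 <= df c * (b - a)) by (apply Rmult_le_pos; [apply Hp; lra| lra]).
    lra.
Qed.

Lemma L1 x : 0 < x <= 1 -> (x+1) * ln x - 2*(x-1) <= 0.
Proof.
  intros Hx.
  set (u := fun z => (z+1) * ln z - 2*(z-1)).
  assert (u x <= u 1).
  { apply (mono u (fun z => ln z + (z+1)/z - 2)); [lra| |].
    - intros z Hz. unfold u. auto_derive. lra. field. lra.
    - intros z Hz. pose proof (ln_ge_1minv z ltac:(lra)).
      replace ((z+1)/z) with (1 + /z) by (field; lra). lra. }
  unfold u in H. rewrite ln_1 in H. lra.
Qed.

Definition fL x := (x-1) / ln x.
Definition fL' x := (x * ln x - x + 1) / (x * (ln x * ln x)).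
Definition fL'' x := - ((x+1) * ln x - 2*(x-1)) / (x * x * (ln x * ln x * ln x)).

Lemma ln_neg x : 0 < x < 1 -> ln x < 0.
Proof. intros. rewrite <- ln_1. apply ln_increasing; lra. Qed.

Lemma fL_der x : 0 < x < 1 -> is_derive fL x (fL' x).
Proof. intros Hx. pose proof (ln_neg x Hx). unfold fL, fL'.
  auto_derive. split; [lra| split; [|exact I]]. lra.
  field. split; lra. Qed.

Lemma fL'_der x : 0 < x < 1 -> is_derive fL' x (fL'' x).
Proof. intros Hx. pose proof (ln_neg x Hx). unfold fL', fL''.
  auto_derive.
  - assert (ln x * ln x > 0) by nra. repeat split; try lra.
    apply Rmult_integral_contrapositive; split; lra.
  - field. split; lra. Qed.

Lemma fL''_nonpos x : 0 < x < 1 -> fL'' x <= 0.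
Proof. intros Hx. pose proof (ln_neg x Hx). pose proof (L1 x ltac:(lra)).
  unfold fL''. unfold Rdiv.
  assert (0 < x*x*(ln x * ln x * -ln x)).
  { apply Rmult_lt_0_compat. nra. assert (0 < ln x * ln x) by nra. nra. }
  replace (x * x * (ln x * ln x * ln x)) with (- (x*x*(ln x * ln x * -ln x))) by ring.
  rewrite Rinv_opp. pose proof (Rinv_0_lt_compat _ H1). nra.
Qed.

Lemma fL'_decr a b : 0 < a -> a <= b -> b < 1 -> fL' b <= fL' a.
Proof. intros. assert (- fL' a <= - fL' b).
  { apply (mono (fun z => - fL' z) (fun z => - fL'' z)); [lra| |].
    - intros z Hz. apply (is_derive_opp fL'). apply fL'_der; lra.
    - intros z Hz. pose proof (fL''_nonpos z ltac:(lra)); lra. }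
  lra. Qed.

Lemma fL_tangent t s : 0 < t < 1 -> 0 < s < 1 -> fL s <= fL t + fL' t * (s - t).
Proof. intros Ht Hs.
  set (G := fun z => fL t + fL' t * (z - t) - fL z).
  assert (HG : forall z, 0 < z < 1 -> is_derive G z (fL' t - fL' z)).
  { intros z Hz. unfold G.
    apply (is_derive_minus (fun z => fL t + fL' t * (z - t)) fL z (fL' t) (fL' z)).
    - auto_derive. exact I. ring.
    - apply fL_der; lra. }
  assert (G t = 0) by (unfold G; ring).
  assert (0 <= G s).
  { destruct (Rle_dec t s).
    - rewrite <- H. apply (mono G (fun z => fL' t - fL' z)); [lra| |].
      + intros z Hz; apply HG; lra.
      + intros z Hz. pose proof (fL'_decr t z ltac:(lra) ltac:(lra) ltac:(lra)). lra.
    - apply Rnot_le_lt in n. assert (- G s <= - G t).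
      { apply (mono (fun z => - G z) (fun z => - (fL' t - fL' z))); [lra| |].
        + intros z Hz. apply (is_derive_opp G). apply HG; lra.
        + intros z Hz. pose proof (fL'_decr z t ltac:(lra) ltac:(lra) ltac:(lra)). lra. }
      lra. }
  unfold G in H0. lra.
Qed.

Definition phi x := if Req_EM_T x 0 then 0 else - (x * ln x).
Definition gam t := fL' t / fL t.

Lemma fL_pos x : 0 < x < 1 -> 0 < fL x.
Proof. intros. pose proof (ln_neg x H). unfold fL, Rdiv.
  assert (/ ln x < 0) by (apply Rinv_lt_0_compat; lra). nra. Qed.

Lemma phi_eq x : 0 < x < 1 -> phi x = x * (1 - x) / fL x.
Proof. intros. pose proof (ln_neg x H). unfold phi, fL.
  destruct (Req_EM_T x 0); [lra|]. field. split; lra. Qed.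

Lemma phi_pos x : 0 < x < 1 -> 0 < phi x.
Proof. intros. pose proof (ln_neg x H). unfold phi.
  destruct (Req_EM_T x 0); [lra|]. nra. Qed.

Lemma pointwise t s : 0 < t < 1 -> 0 < s < 1 ->
  ln (phi t) - ln (phi s) <= - ln (s/t) - ln ((1-s)/(1-t)) + gam t * (s - t).
Proof. intros Ht Hs.
  pose proof (fL_pos t Ht). pose proof (fL_pos s Hs).
  rewrite !phi_eq by lra.
  unfold Rdiv. rewrite !ln_mult; try apply Rinv_0_lt_compat; try lra; try nra.
  rewrite !ln_Rinv by lra.
  pose proof (ln_le_sub1 (fL s / fL t) ltac:(apply Rdiv_lt_0_compat; lra)).
  rewrite ln_div in H1 by lra.
  pose proof (fL_tangent t s Ht Hs).
  assert (fL s / fL t - 1 <= gam t * (s - t)).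
  { unfold gam. apply (Rmult_le_reg_r (fL t)); [lra|].
    replace ((fL s / fL t - 1) * fL t) with (fL s - fL t) by (field; lra).
    replace (fL' t / fL t * (s - t) * fL t) with (fL' t * (s - t)) by (field; lra). lra. }
  lra.
Qed.

Lemma sumn_0 f : sumn 0 f = 0.
Proof. reflexivity. Qed.

Lemma sumn_S k f : sumn (S k) f = sumn k f + f k.
Proof. unfold sumn. rewrite seq_S, map_app, fold_right_app. simpl.
  generalize (map f (seq 0 k)). intros l. induction l; simpl; [ring|]. rewrite IHl. ring. Qed.

Lemma sumn_ext k f g : (forall i, (i < k)%nat -> f i = g i) -> sumn k f = sumn k g.
Proof. induction k; intros H; [reflexivity|]. rewrite !sumn_S. rewrite IHk by (intros; apply H; lia).
  rewrite H by lia. reflexivity. Qed.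

Lemma sumn_plus k f g : sumn k (fun i => f i + g i) = sumn k f + sumn k g.
Proof. induction k; [unfold sumn; simpl; ring|]. rewrite !sumn_S, IHk. ring. Qed.

Lemma sumn_scal k c f : sumn k (fun i => c * f i) = c * sumn k f.
Proof. induction k; [unfold sumn; simpl; ring|]. rewrite !sumn_S, IHk. ring. Qed.

Lemma sumn_opp k f : sumn k (fun i => - f i) = - sumn k f.
Proof. induction k; [unfold sumn; simpl; ring|]. rewrite !sumn_S, IHk. ring. Qed.

Lemma sumn_minus k f g : sumn k (fun i => f i - g i) = sumn k f - sumn k g.
Proof. induction k; [unfold sumn; simpl; ring|]. rewrite !sumn_S, IHk. ring. Qed.

Lemma sumn_const0 k : sumn k (fun _ => 0) = 0.
Proof. induction k; [reflexivity|]. rewrite sumn_S, IHk. ring. Qed.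

Lemma sumn_le k f g : (forall i, (i < k)%nat -> f i <= g i) -> sumn k f <= sumn k g.
Proof. induction k; intros H; [unfold sumn; simpl; lra|]. rewrite !sumn_S.
  pose proof (IHk ltac:(intros; apply H; lia)). pose proof (H k ltac:(lia)). lra. Qed.

Lemma sumn_nonneg k f : (forall i, (i < k)%nat -> 0 <= f i) -> 0 <= sumn k f.
Proof. intros. rewrite <- (sumn_const0 k). apply sumn_le. auto. Qed.

Lemma sumn_swap a b f : sumn a (fun i => sumn b (fun j => f i j)) = sumn b (fun j => sumn a (fun i => f i j)).
Proof. induction a.
  - unfold sumn at 1. simpl. rewrite sumn_const0. reflexivity.
  - rewrite sumn_S, IHa. rewrite <- sumn_plus. apply sumn_ext. intros. rewrite sumn_S. reflexivity. Qed.

Lemma term_le_sum k f i : (forall j, (j < k)%nat -> 0 <= f j) -> (i < k)%nat -> f i <= sumn k f.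
Proof. induction k; intros H Hi; [lia|]. rewrite sumn_S.
  assert (0 <= sumn k f) by (apply sumn_nonneg; intros; apply H; lia).
  destruct (Nat.eq_dec i k).
  - subst. lra.
  - pose proof (IHk ltac:(intros; apply H; lia) ltac:(lia)). pose proof (H k ltac:(lia)). lra. Qed.

Lemma sumn_indic k i g : (i < k)%nat -> sumn k (fun j => if Nat.eqb j i then g j else 0) = g i.
Proof. induction k; intros Hi; [lia|]. rewrite sumn_S.
  destruct (Nat.eq_dec i k).
  - subst. rewrite Nat.eqb_refl. rewrite (sumn_ext k _ (fun _ => 0)). rewrite sumn_const0; ring.
    intros j Hj. destruct (Nat.eqb_spec j k); [lia|reflexivity].
  - rewrite IHk by lia. destruct (Nat.eqb_spec k i); [lia|ring]. Qed.

Lemma sumn_split k i g : (i < k)%nat ->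
  sumn k g = g i + sumn k (fun j => if Nat.eqb j i then 0 else g j).
Proof. intros Hi. rewrite <- (sumn_indic k i g Hi) at 1. rewrite <- sumn_plus.
  apply sumn_ext. intros j _. destruct (Nat.eqb j i); ring. Qed.

Lemma sumn_nonzero k f : sumn k f <> 0 -> exists i, (i < k)%nat /\ f i <> 0.
Proof. induction k; intros H; [unfold sumn in H; simpl in H; lra|]. rewrite sumn_S in H.
  destruct (Req_dec (f k) 0).
  - destruct IHk as [i [Hi Hf]]; [lra|]. exists i; split; [lia|auto].
  - exists k; split; [lia|auto]. Qed.

Lemma sumn_nonneg_zero k f i : (forall j, (j < k)%nat -> 0 <= f j) -> sumn k f <= 0 ->
  (i < k)%nat -> f i = 0.
Proof. intros. pose proof (term_le_sum k f i H H1). pose proof (H i H1). lra. Qed.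

Lemma prodn_S k f : prodn (S k) f = prodn k f * f k.
Proof. unfold prodn. rewrite seq_S, map_app, fold_right_app. simpl.
  generalize (map f (seq 0 k)). intros l. induction l; simpl; [ring|]. rewrite IHl. ring. Qed.

Lemma prodn_ext k f g : (forall i, (i < k)%nat -> f i = g i) -> prodn k f = prodn k g.
Proof. induction k; intros H; [reflexivity|]. rewrite !prodn_S. rewrite IHk by (intros; apply H; lia).
  rewrite H by lia. reflexivity. Qed.

Lemma prodn_nonneg k f : (forall i, (i < k)%nat -> 0 <= f i) -> 0 <= prodn k f.
Proof. induction k; intros H; [unfold prodn; simpl; lra|]. rewrite prodn_S. apply Rmult_le_pos.
  apply IHk; intros; apply H; lia. apply H; lia. Qed.
Lemma ln_0 : ln 0 = 0.
Proof. unfold ln. destruct (Rlt_dec 0 0) as [h|h]. exfalso; apply (Rlt_irrefl 0 h). reflexivity. Qed.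

Lemma div0 x : x / 0 = 0.
Proof. unfold Rdiv. rewrite Rinv_0. ring. Qed.

Lemma phi_nonneg x : 0 <= x <= 1 -> 0 <= phi x.
Proof. intros. unfold phi. destruct (Req_EM_T x 0); [lra|].
  assert (ln x <= 0) by (rewrite <- ln_1; apply ln_le; lra). nra. Qed.

Lemma phi_1 : phi 1 = 0.
Proof. unfold phi. destruct (Req_EM_T 1 0); [lra|]. rewrite ln_1. ring. Qed.

Lemma phi_0 : phi 0 = 0.
Proof. unfold phi. destruct (Req_EM_T 0 0); [reflexivity|lra]. Qed.

Lemma jensen k (b x : nat -> R) : (forall i, (i < k)%nat -> 0 <= b i) -> sumn k b = 1 ->
  (forall i, (i < k)%nat -> 0 < x i) ->
  0 < sumn k (fun i => b i * x i) /\
  sumn k (fun i => b i * ln (x i)) <= ln (sumn k (fun i => b i * x i)).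
Proof. intros Hb Hs Hx.
  set (m := sumn k (fun i => b i * x i)).
  assert (Hm : 0 < m).
  { destruct (sumn_nonzero k b) as [i [Hi Hbi]]; [lra|].
    pose proof (Hb i Hi). pose proof (Hx i Hi).
    assert (0 < b i * x i) by (apply Rmult_lt_0_compat; lra).
    pose proof (term_le_sum k (fun i => b i * x i) i ltac:(intros; apply Rmult_le_pos; [apply Hb; lia| apply Rlt_le, Hx; lia]) Hi).
    unfold m; simpl in *; lra. }
  split; [exact Hm|].
  assert (sumn k (fun i => b i * ln (x i)) - ln m <= 0).
  { replace (ln m) with (sumn k (fun i => b i * ln m)) by (rewrite (sumn_ext k _ (fun i => ln m * b i)) by (intros; ring); rewrite sumn_scal, Hs; ring).
    rewrite <- sumn_minus.
    apply Rle_trans with (sumn k (fun i => b i * x i / m - b i)).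
    - apply sumn_le. intros i Hi. pose proof (Hx i Hi). pose proof (Hb i Hi).
      pose proof (ln_le_sub1 (x i / m) ltac:(apply Rdiv_lt_0_compat; lra)).
      rewrite ln_div in H1 by lra.
      replace (b i * ln (x i) - b i * ln m) with (b i * (ln (x i) - ln m)) by ring.
      replace (b i * x i / m - b i) with (b i * (x i / m - 1)) by (field; lra).
      apply Rmult_le_compat_l; lra.
    - rewrite sumn_minus, Hs.
      rewrite (sumn_ext k _ (fun i => / m * (b i * x i))) by (intros; unfold Rdiv; ring).
      rewrite sumn_scal. fold m. field_simplify; lra. }
  lra.
Qed.

Definition Kt (a b : R) := if Req_EM_T a 0 then 0 else a * ln (a / b).
Definition Ent (M : nat) (r : nat -> R) :=
  - sumn M (fun w => if Req_EM_T (r w) 0 then 0 else r w * ln (r w)).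

Lemma Ent_phi M r : Ent M r = sumn M (fun w => phi (r w)).
Proof. unfold Ent. rewrite <- sumn_opp. apply sumn_ext. intros. unfold phi.
  destruct (Req_EM_T (r i) 0); ring. Qed.

Lemma Kt_self a : Kt a a = 0.
Proof. unfold Kt. destruct (Req_EM_T a 0); [reflexivity|].
  replace (a / a) with 1 by (field; auto). rewrite ln_1; ring. Qed.

Section Abs.
Variables (M nY : nat) (p : nat -> R) (L : nat -> nat -> R) (B : R).
Hypothesis Hp0 : forall w, (w < M)%nat -> 0 <= p w.
Hypothesis Hp1 : sumn M p = 1.
Hypothesis HL0 : forall w y, (w < M)%nat -> (y < nY)%nat -> 0 <= L w y.
Hypothesis HL1 : forall w, (w < M)%nat -> sumn nY (L w) = 1.
Hypothesis Hsupp : forall w v y, (w < M)%nat -> (v < M)%nat -> (y < nY)%nat ->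
  L v y = 0 -> L w y = 0.
Hypothesis HKL : forall w v, (w < M)%nat -> (v < M)%nat ->
  sumn nY (fun y => Kt (L w y) (L v y)) <= B.
Hypothesis HB : 0 <= B.

Definition qA y := sumn M (fun w => p w * L w y).
Definition postA y w := p w * L w y / qA y.

Lemma q_nonneg y : (y < nY)%nat -> 0 <= qA y.
Proof. intros. apply sumn_nonneg. intros. apply Rmult_le_pos; auto. Qed.

Lemma good y : (y < nY)%nat -> qA y <> 0 -> forall w, (w < M)%nat -> 0 < L w y.
Proof. intros Hy Hq w Hw. destruct (sumn_nonzero _ _ Hq) as [w0 [Hw0 Hne]].
  pose proof (HL0 w y Hw Hy). destruct (Req_dec (L w y) 0); [|lra].
  exfalso. apply Hne. rewrite (Hsupp w0 w y Hw0 Hw Hy H0). ring. Qed.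

Lemma bad y : (y < nY)%nat -> qA y = 0 -> forall w, (w < M)%nat -> L w y = 0.
Proof. intros Hy Hq w Hw. destruct (sumn_nonzero M p) as [w0 [Hw0 Hne]]; [lra|].
  apply (Hsupp w w0 y Hw Hw0 Hy).
  assert (p w0 * L w0 y = 0).
  { apply (sumn_nonneg_zero M (fun w => p w * L w y)).
    intros; apply Rmult_le_pos; auto. unfold qA in Hq; lra. auto. }
  apply Rmult_integral in H. destruct H; [contradiction|auto]. Qed.

Lemma q_sum : sumn nY qA = 1.
Proof. unfold qA. rewrite sumn_swap. rewrite <- Hp1. apply sumn_ext. intros w Hw.
  rewrite sumn_scal. rewrite HL1 by auto. ring. Qed.

Lemma post_bad y w : qA y = 0 -> postA y w = 0.
Proof. intros. unfold postA. rewrite H. apply div0. Qed.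

Lemma post_range y w : (y < nY)%nat -> (w < M)%nat -> 0 <= postA y w <= 1.
Proof. intros Hy Hw. destruct (Req_dec (qA y) 0).
  - rewrite post_bad by auto. lra.
  - pose proof (q_nonneg y Hy).
    pose proof (term_le_sum M (fun w => p w * L w y) w ltac:(intros; apply Rmult_le_pos; auto) Hw).
    pose proof (Rmult_le_pos _ _ (Hp0 w Hw) (HL0 w y Hw Hy)).
    unfold postA. fold (qA y) in H1. split.
    + apply Rdiv_le_0_compat; lra.
    + apply (Rmult_le_reg_r (qA y)); [lra|]. field_simplify; lra. Qed.


Lemma p_le1 w : (w < M)%nat -> p w <= 1.
Proof. intros. rewrite <- Hp1. apply (term_le_sum M p w Hp0 H). Qed.

Lemma Ent_p_nonneg : 0 <= Ent M p.
Proof. rewrite Ent_phi. apply sumn_nonneg. intros. apply phi_nonneg. split; [auto|apply p_le1; auto]. Qed.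

Lemma caseA_point : Ent M p = 0 ->
  exists w0, (w0 < M)%nat /\ p w0 = 1 /\ forall w, (w < M)%nat -> w <> w0 -> p w = 0.
Proof. intros H. rewrite Ent_phi in H.
  destruct (sumn_nonzero M p) as [w0 [Hw0 Hne]]; [lra|].
  assert (Hphi : phi (p w0) = 0).
  { apply (sumn_nonneg_zero M (fun w => phi (p w))); auto; [|lra].
    intros; apply phi_nonneg; split; [auto|apply p_le1; auto]. }
  assert (p w0 = 1).
  { pose proof (p_le1 w0 Hw0). pose proof (Hp0 w0 Hw0).
    destruct (Req_dec (p w0) 1); auto.
    pose proof (phi_pos (p w0) ltac:(lra)). lra. }
  exists w0. split; [auto|split;[auto|]]. intros w Hw Hne'.
  pose proof (sumn_split M w0 p Hw0). rewrite Hp1, H0 in H1.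
  pose proof (sumn_nonneg_zero M (fun j => if Nat.eqb j w0 then 0 else p j) w
    ltac:(intros j Hj; cbv beta; destruct (Nat.eqb j w0); [right; reflexivity|auto]) ltac:(lra) Hw).
  simpl in H2. destruct (Nat.eqb_spec w w0); [lia|auto]. Qed.

Lemma caseA y : (y < nY)%nat -> Ent M p = 0 -> Ent M (postA y) = 0.
Proof. intros Hy H. destruct (caseA_point H) as [w0 [Hw0 [H1 H2]]].
  rewrite Ent_phi. rewrite <- (sumn_const0 M). apply sumn_ext. intros w Hw.
  destruct (Req_dec (qA y) 0).
  - rewrite post_bad by auto. apply phi_0.
  - destruct (Nat.eq_dec w w0).
    + subst. assert (qA y = L w0 y).
      { unfold qA. rewrite (sumn_split M w0) by auto. rewrite H1.
        rewrite (sumn_ext M _ (fun _ => 0)). rewrite sumn_const0; ring.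
        intros j Hj. destruct (Nat.eqb_spec j w0); [auto|]. rewrite H2 by auto. ring. }
      unfold postA. rewrite H1, H3. replace (1 * L w0 y / L w0 y) with 1.
      apply phi_1. field. rewrite <- H3; auto.
    + unfold postA. rewrite H2 by auto. replace (0 * L w y / qA y) with 0 by (field; auto). apply phi_0.
Qed.


Lemma interior w : (w < M)%nat -> phi (p w) <> 0 -> 0 < p w < 1.
Proof. intros Hw H. pose proof (Hp0 w Hw). pose proof (p_le1 w Hw).
  destruct (Req_dec (p w) 0) as [e|]; [rewrite e, phi_0 in H; lra|].
  destruct (Req_dec (p w) 1) as [e|]; [rewrite e, phi_1 in H; lra|]. lra. Qed.

Lemma rest_pos y w : (y < nY)%nat -> qA y <> 0 -> (w < M)%nat -> p w < 1 ->
  0 < sumn M (fun v => if Nat.eqb v w then 0 else p v * L v y).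
Proof. intros Hy Hq Hw Hpw.
  pose proof (sumn_split M w p Hw). rewrite Hp1 in H.
  destruct (sumn_nonzero M (fun j => if Nat.eqb j w then 0 else p j)) as [v [Hv Hne]]; [lra|].
  destruct (Nat.eqb_spec v w); [contradiction|].
  pose proof (Hp0 v Hv). pose proof (good y Hy Hq v Hv).
  assert (0 < p v * L v y) by (apply Rmult_lt_0_compat; lra).
  pose proof (term_le_sum M (fun j => if Nat.eqb j w then 0 else p j * L j y) v
    ltac:(intros j Hj; cbv beta; destruct (Nat.eqb j w); [right; reflexivity|apply Rmult_le_pos; auto]) Hv).
  cbv beta in H3. destruct (Nat.eqb_spec v w); [contradiction|]. lra. Qed.

Lemma q_split y w : (w < M)%nat ->
  qA y = p w * L w y + sumn M (fun v => if Nat.eqb v w then 0 else p v * L v y).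
Proof. intros Hw. unfold qA. rewrite (sumn_split M w) by auto. reflexivity. Qed.

Lemma post_interior y w : (y < nY)%nat -> qA y <> 0 -> (w < M)%nat -> 0 < p w < 1 ->
  0 < postA y w < 1.
Proof. intros Hy Hq Hw Hpw. pose proof (good y Hy Hq w Hw).
  pose proof (rest_pos y w Hy Hq Hw ltac:(lra)). pose proof (q_split y w Hw).
  assert (0 < p w * L w y) by (apply Rmult_lt_0_compat; lra).
  unfold postA. split.
  - apply Rdiv_lt_0_compat; lra.
  - apply (Rmult_lt_reg_r (qA y)); [lra|]. field_simplify; lra. Qed.

Definition beta w := phi (p w) / Ent M p.
Definition Zp y w := if Req_EM_T (phi (p w)) 0 then 0 else
  - ln (postA y w / p w) - ln ((1 - postA y w) / (1 - p w)) + gam (p w) * (postA y w - p w).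

Lemma beta_nonneg w : 0 < Ent M p -> (w < M)%nat -> 0 <= beta w.
Proof. intros. unfold beta. apply Rdiv_le_0_compat; [|lra].
  apply phi_nonneg. split; [auto|apply p_le1; auto]. Qed.

Lemma beta_sum : 0 < Ent M p -> sumn M beta = 1.
Proof. intros. unfold beta. rewrite (sumn_ext M _ (fun w => / Ent M p * phi (p w))) by (intros; unfold Rdiv; ring).
  rewrite sumn_scal, <- Ent_phi. field. lra. Qed.

Lemma B1 y : (y < nY)%nat -> qA y <> 0 -> 0 < Ent M p ->
  ln (Ent M p) - ln (Ent M (postA y)) <= sumn M (fun w => beta w * Zp y w).
Proof. intros Hy Hq HH.
  set (x := fun w => if Req_EM_T (phi (p w)) 0 then 1 else phi (postA y w) / phi (p w)).
  destruct (jensen M beta x) as [HS HJ].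
  - intros; apply beta_nonneg; auto.
  - apply beta_sum; auto.
  - intros w Hw. unfold x. destruct (Req_EM_T (phi (p w)) 0); [lra|].
    pose proof (interior w Hw n). apply Rdiv_lt_0_compat.
    apply phi_pos, post_interior; auto. apply phi_pos; auto.
  - set (S := sumn M (fun i => beta i * x i)) in *.
    assert (HSle : S <= Ent M (postA y) / Ent M p).
    { assert (S = / Ent M p * sumn M (fun w => if Req_EM_T (phi (p w)) 0 then 0 else phi (postA y w))).
      { unfold S. rewrite <- sumn_scal. apply sumn_ext. intros w Hw. unfold x, beta.
        destruct (Req_EM_T (phi (p w)) 0). rewrite e. unfold Rdiv. ring. field. split; lra. }
      assert (sumn M (fun w => if Req_EM_T (phi (p w)) 0 then 0 else phi (postA y w)) <= Ent M (postA y)).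
      { rewrite (Ent_phi M (postA y)). apply sumn_le. intros w Hw. destruct (Req_EM_T (phi (p w)) 0); [|lra].
        apply phi_nonneg, post_range; auto. }
      rewrite H. replace (Ent M (postA y) / Ent M p) with (/ Ent M p * Ent M (postA y)) by (unfold Rdiv; ring).
      apply Rmult_le_compat_l; auto. left; apply Rinv_0_lt_compat; auto. }
    assert (HE : 0 < Ent M (postA y)).
    { assert (0 < Ent M (postA y) / Ent M p) by lra.
      apply Rmult_lt_reg_r with (/ Ent M p). apply Rinv_0_lt_compat; lra. rewrite Rmult_0_l. exact H. }
    assert (ln S <= ln (Ent M (postA y)) - ln (Ent M p)).
    { rewrite <- ln_div by lra. apply ln_le; lra. }
    assert (- sumn M (fun i => beta i * ln (x i)) <= sumn M (fun w => beta w * Zp y w)).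
    { rewrite <- sumn_opp. apply sumn_le. intros w Hw.
      unfold x, Zp. destruct (Req_EM_T (phi (p w)) 0).
      - rewrite ln_1. lra.
      - pose proof (interior w Hw n). pose proof (post_interior y w Hy Hq Hw H0).
        pose proof (beta_nonneg w HH Hw).
        pose proof (pointwise (p w) (postA y w) H0 H1).
        rewrite ln_div by (apply phi_pos; auto).
        assert (- (ln (phi (postA y w)) - ln (phi (p w))) <= - ln (postA y w / p w) - ln ((1 - postA y w) / (1 - p w)) + gam (p w) * (postA y w - p w)) by lra.
        replace (- (beta w * (ln (phi (postA y w)) - ln (phi (p w))))) with (beta w * (- (ln (phi (postA y w)) - ln (phi (p w))))) by ring.
        apply Rmult_le_compat_l; auto. }
    lra.
Qed.


Lemma claim_c y w : (y < nY)%nat -> (w < M)%nat -> 0 < p w -> qA y * postA y w = p w * L w y.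
Proof. intros Hy Hw Hpw. destruct (Req_dec (qA y) 0).
  - rewrite H, (bad y Hy H w Hw). ring.
  - unfold postA. field. auto. Qed.

Lemma claim_a y w : (y < nY)%nat -> (w < M)%nat -> 0 < p w ->
  qA y * (- ln (postA y w / p w)) <= sumn M (fun v => p v * Kt (L v y) (L w y)).
Proof. intros Hy Hw Hpw. destruct (Req_dec (qA y) 0) as [Hq|Hq].
  - rewrite Hq. rewrite (sumn_ext M _ (fun _ => 0)). rewrite sumn_const0. lra.
    intros v Hv. unfold Kt. rewrite (bad y Hy Hq v Hv). destruct (Req_EM_T 0 0); [ring|lra].
  - pose proof (q_nonneg y Hy) as Hq0. assert (Hqp : 0 < qA y) by lra.
    pose proof (good y Hy Hq) as HG. pose proof (HG w Hw) as Ha.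
    replace (postA y w / p w) with (L w y / qA y) by (unfold postA; field; split; lra).
    rewrite ln_div by lra.
    assert (E1 : qA y * - (ln (L w y) - ln (qA y)) = sumn M (fun v => p v * L v y * (ln (qA y) - ln (L w y)))).
    { rewrite (sumn_ext M _ (fun v => (ln (qA y) - ln (L w y)) * (p v * L v y))) by (intros; ring).
      rewrite sumn_scal. unfold qA. ring. }
    assert (E2 : sumn M (fun v => p v * Kt (L v y) (L w y)) = sumn M (fun v => p v * L v y * (ln (L v y) - ln (L w y)))).
    { apply sumn_ext. intros v Hv. unfold Kt. pose proof (HG v Hv).
      destruct (Req_EM_T (L v y) 0); [lra|]. rewrite ln_div by lra. ring. }
    rewrite E1, E2.
    assert (0 <= sumn M (fun v => p v * L v y * (ln (L v y) - ln (L w y))) - sumn M (fun v => p v * L v y * (ln (qA y) - ln (L w y)))); [|lra].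
    rewrite <- sumn_minus.
    apply Rle_trans with (sumn M (fun v => p v * L v y - p v * qA y)).
    + rewrite sumn_minus.
      rewrite (sumn_ext M (fun v => p v * qA y) (fun v => qA y * p v)) by (intros; ring).
      rewrite sumn_scal, Hp1. fold (qA y). lra.
    + apply sumn_le. intros v Hv. pose proof (HG v Hv). pose proof (Hp0 v Hv).
      pose proof (ln_ge_1minv (L v y / qA y) ltac:(apply Rdiv_lt_0_compat; lra)).
      rewrite ln_div in H1 by lra.
      replace (/ (L v y / qA y)) with (qA y / L v y) in H1 by (field; split; lra).
      assert (L v y * (1 - qA y / L v y) <= L v y * (ln (L v y) - ln (qA y))) by (apply Rmult_le_compat_l; lra).
      replace (L v y * (1 - qA y / L v y)) with (L v y - qA y) in H2 by (field; lra).
      replace (p v * L v y * (ln (L v y) - ln (L w y)) - p v * L v y * (ln (qA y) - ln (L w y)))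
        with (p v * (L v y * (ln (L v y) - ln (qA y)))) by ring.
      replace (p v * L v y - p v * qA y) with (p v * (L v y - qA y)) by ring.
      apply Rmult_le_compat_l; lra.
Qed.


Definition wt w v := if Nat.eqb v w then 0 else p v / (1 - p w).

Lemma wt_nonneg w v : (w < M)%nat -> (v < M)%nat -> p w < 1 -> 0 <= wt w v.
Proof. intros. unfold wt. destruct (Nat.eqb v w); [lra|]. apply Rdiv_le_0_compat; [auto|lra]. Qed.

Lemma wt_sum w : (w < M)%nat -> p w < 1 -> sumn M (wt w) = 1.
Proof. intros Hw Ht. pose proof (sumn_split M w p Hw). rewrite Hp1 in H.
  unfold wt. rewrite (sumn_ext M _ (fun v => / (1 - p w) * (if Nat.eqb v w then 0 else p v))).
  rewrite sumn_scal. replace (sumn M (fun j => if Nat.eqb j w then 0 else p j)) with (1 - p w) by lra.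
  field. lra.
  intros v Hv. destruct (Nat.eqb v w); unfold Rdiv; ring. Qed.

Lemma claim_b y w : (y < nY)%nat -> (w < M)%nat -> 0 < p w < 1 ->
  qA y * (- ln ((1 - postA y w) / (1 - p w))) <= p w * sumn M (fun v => wt w v * Kt (L w y) (L v y)).
Proof. intros Hy Hw Ht. destruct (Req_dec (qA y) 0) as [Hq|Hq].
  - rewrite Hq. rewrite (sumn_ext M _ (fun _ => 0)). rewrite sumn_const0. lra.
    intros v Hv. unfold Kt. rewrite (bad y Hy Hq w Hw). destruct (Req_EM_T 0 0); [ring|lra].
  - pose proof (q_nonneg y Hy) as Hq0. assert (Hqp : 0 < qA y) by lra.
    pose proof (good y Hy Hq) as HG. pose proof (HG w Hw) as Ha.
    pose proof (rest_pos y w Hy Hq Hw ltac:(lra)) as HR.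
    pose proof (q_split y w Hw) as Hqs.
    set (R := sumn M (fun v => if Nat.eqb v w then 0 else p v * L v y)) in *.
    set (t := p w) in *. set (a := L w y) in *.
    set (Mb := R / (1 - t)).
    assert (HMb : 0 < Mb) by (apply Rdiv_lt_0_compat; lra).
    replace ((1 - postA y w) / (1 - t)) with (Mb / qA y) by (unfold Mb, postA; fold t a; rewrite Hqs; field; repeat split; lra).
    rewrite ln_div by lra.
    destruct (jensen M (wt w) (fun v => L v y / a)) as [_ HJ].
    + intros; apply wt_nonneg; auto; exact (proj2 Ht).
    + apply wt_sum; auto; exact (proj2 Ht).
    + intros v Hv. apply Rdiv_lt_0_compat; auto.
    + assert (EJ : sumn M (fun v => wt w v * (L v y / a)) = Mb / a).
      { unfold wt, Mb, R. rewrite (sumn_ext M _ (fun v => / ((1 - t) * a) * (if Nat.eqb v w then 0 else p v * L v y))).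
        rewrite sumn_scal. field. split; lra.
        intros v Hv. destruct (Nat.eqb v w). ring. fold t. field. split; lra. }
      rewrite EJ in HJ. rewrite ln_div in HJ by lra.
      assert (ER : sumn M (fun v => wt w v * Kt a (L v y)) = a * (- sumn M (fun v => wt w v * ln (L v y / a)))).
      { rewrite <- sumn_opp, <- sumn_scal. apply sumn_ext. intros v Hv.
        unfold Kt. pose proof (HG v Hv). destruct (Req_EM_T a 0); [lra|].
        rewrite !ln_div by lra. ring. }
      rewrite ER.
      assert (F1 : ln (qA y) - ln Mb <= (1 - t) * qA y / R - 1).
      { pose proof (ln_le_sub1 (qA y / Mb) ltac:(apply Rdiv_lt_0_compat; lra)).
        rewrite ln_div in H by lra. replace (qA y / Mb) with ((1 - t) * qA y / R) in H by (unfold Mb; field; split; lra). lra. }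
      assert (F2 : ln (qA y) - ln a <= qA y / a - 1).
      { pose proof (ln_le_sub1 (qA y / a) ltac:(apply Rdiv_lt_0_compat; lra)).
        rewrite ln_div in H by lra. lra. }
      assert (G1 : R * (ln (qA y) - ln Mb) <= (1 - t) * qA y - R).
      { apply Rmult_le_compat_l with (r := R) in F1; [|lra].
        replace (R * ((1 - t) * qA y / R - 1)) with ((1 - t) * qA y - R) in F1 by (field; lra). lra. }
      assert (G2 : t * a * (ln (qA y) - ln a) <= t * qA y - t * a).
      { apply Rmult_le_compat_l with (r := t * a) in F2; [|nra].
        replace (t * a * (qA y / a - 1)) with (t * qA y - t * a) in F2 by (field; lra). lra. }
      assert (G3 : t * a * (ln a - ln Mb) <= t * a * (- sumn M (fun v => wt w v * ln (L v y / a)))).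
      { apply Rmult_le_compat_l; nra. }
      assert (qA y * - (ln Mb - ln (qA y)) = R * (ln (qA y) - ln Mb) + t * a * (ln (qA y) - ln a) + t * a * (ln a - ln Mb)).
      { rewrite Hqs. ring. }
      rewrite H.
      replace (t * (a * (- sumn M (fun v => wt w v * ln (L v y / a))))) with (t * a * (- sumn M (fun v => wt w v * ln (L v y / a)))) by ring.
      lra.
Qed.


Definition klL w v := sumn nY (fun y => Kt (L w y) (L v y)).

Lemma B3 w : (w < M)%nat -> phi (p w) <> 0 -> sumn nY (fun y => qA y * Zp y w) <= B.
Proof. intros Hw Hphi. pose proof (interior w Hw Hphi) as Ht.
  apply Rle_trans with (sumn nY (fun y =>
     sumn M (fun v => p v * Kt (L v y) (L w y)) + p w * sumn M (fun v => wt w v * Kt (L w y) (L v y))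
     + gam (p w) * (p w * L w y - qA y * p w))).
  { apply sumn_le. intros y Hy. unfold Zp. destruct (Req_EM_T (phi (p w)) 0); [contradiction|].
    pose proof (claim_a y w Hy Hw ltac:(lra)). pose proof (claim_b y w Hy Hw Ht).
    pose proof (claim_c y w Hy Hw ltac:(lra)).
    replace (qA y * (- ln (postA y w / p w) - ln ((1 - postA y w) / (1 - p w)) + gam (p w) * (postA y w - p w)))
      with (qA y * (- ln (postA y w / p w)) + qA y * (- ln ((1 - postA y w) / (1 - p w))) + gam (p w) * (qA y * postA y w - qA y * p w)) by ring.
    rewrite H1. lra. }
  rewrite !sumn_plus.
  rewrite (sumn_swap nY M (fun y v => p v * Kt (L v y) (L w y))).
  rewrite (sumn_scal nY (p w)).
  rewrite (sumn_swap nY M (fun y v => wt w v * Kt (L w y) (L v y))).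
  rewrite (sumn_scal nY (gam (p w))). rewrite sumn_minus.
  rewrite (sumn_ext nY (fun y => qA y * p w) (fun y => p w * qA y)) by (intros; ring).
  rewrite !sumn_scal. rewrite q_sum. rewrite (HL1 w Hw).
  rewrite (sumn_ext M (fun v => sumn nY (fun y => p v * Kt (L v y) (L w y))) (fun v => p v * klL v w))
    by (intros; unfold klL; rewrite sumn_scal; reflexivity).
  rewrite (sumn_ext M (fun v => sumn nY (fun y => wt w v * Kt (L w y) (L v y))) (fun v => wt w v * klL w v))
    by (intros; unfold klL; rewrite sumn_scal; reflexivity).
  assert (A1 : sumn M (fun v => p v * klL v w) <= (1 - p w) * B).
  { rewrite (sumn_split M w) by auto.
    assert (klL w w = 0).
    { unfold klL. rewrite <- (sumn_const0 nY). apply sumn_ext. intros. apply Kt_self. }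
    rewrite H, Rmult_0_r, Rplus_0_l.
    pose proof (sumn_split M w p Hw). rewrite Hp1 in H0.
    replace (1 - p w) with (sumn M (fun j => if Nat.eqb j w then 0 else p j)) by lra.
    rewrite Rmult_comm, <- sumn_scal. apply sumn_le. intros v Hv.
    destruct (Nat.eqb v w). lra.
    pose proof (HKL v w Hv Hw). pose proof (Hp0 v Hv). unfold klL.
    rewrite Rmult_comm. apply Rmult_le_compat_r; auto. }
  assert (A2 : sumn M (fun v => wt w v * klL w v) <= B).
  { apply Rle_trans with (sumn M (fun v => B * wt w v)).
    - apply sumn_le. intros v Hv. rewrite Rmult_comm. apply Rmult_le_compat_r.
      apply wt_nonneg; auto; lra. apply HKL; auto.
    - rewrite sumn_scal, wt_sum by (auto; lra). lra. }
  assert (p w * sumn M (fun v => wt w v * klL w v) <= p w * B) by (apply Rmult_le_compat_l; lra).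
  replace (gam (p w) * (p w * 1 - p w * 1)) with 0 by ring. lra.
Qed.


Theorem abs_main : sumn nY (fun y => qA y * (ln (Ent M p) - ln (Ent M (postA y)))) <= B.
Proof.
  destruct (Req_dec (Ent M p) 0) as [H0|H0].
  - rewrite (sumn_ext nY _ (fun _ => 0)). rewrite sumn_const0; lra.
    intros y Hy. rewrite (caseA y Hy H0), H0, ln_0. ring.
  - assert (HH : 0 < Ent M p) by (pose proof Ent_p_nonneg; lra).
    apply Rle_trans with (sumn nY (fun y => qA y * sumn M (fun w => beta w * Zp y w))).
    { apply sumn_le. intros y Hy. destruct (Req_dec (qA y) 0) as [Hq|Hq].
      - rewrite Hq. lra.
      - apply Rmult_le_compat_l. apply q_nonneg; auto. apply B1; auto. }
    rewrite (sumn_ext nY _ (fun y => sumn M (fun w => beta w * (qA y * Zp y w)))).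
    2:{ intros y Hy. rewrite <- sumn_scal. apply sumn_ext. intros; ring. }
    rewrite (sumn_swap nY M (fun y w => beta w * (qA y * Zp y w))).
    apply Rle_trans with (sumn M (fun w => B * beta w)).
    + apply sumn_le. intros w Hw. rewrite sumn_scal. rewrite (Rmult_comm B).
      destruct (Req_EM_T (phi (p w)) 0).
      * unfold beta. rewrite e. unfold Rdiv. lra.
      * apply Rmult_le_compat_l. apply beta_nonneg; auto. apply B3; auto.
    + rewrite sumn_scal, beta_sum by auto. lra.
Qed.

End Abs.

Lemma pjoint_snoc M P enc w ys y :
  pjoint M P enc w (ys ++ y :: nil) = pjoint M P enc w ys * P (enc w ys) y.
Proof. unfold pjoint. rewrite length_app. simpl. rewrite Nat.add_1_r. rewrite prodn_S.
  rewrite (prodn_ext (length ys) _ (fun i => P (enc w (firstn i ys)) (nth i ys 0%nat))).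
  - rewrite firstn_app, Nat.sub_diag, firstn_all. simpl. rewrite app_nil_r.
    rewrite app_nth2 by lia. rewrite Nat.sub_diag. simpl. ring.
  - intros i Hi. rewrite firstn_app. replace (i - length ys)%nat with 0%nat by lia. simpl.
    rewrite app_nil_r. rewrite app_nth1 by lia. reflexivity.
Qed.

Theorem lemma7 (nX nY : nat) (P : nat -> nat -> R) (M : nat)
  (enc : nat -> list nat -> nat) (B : R) :
  is_DMC nX nY P ->
  (0 < M)%nat ->
  valid_encoder M nX enc ->
  (* B = max_{x,x'} D(P(.|x)||P(.|x')), assumed finite *)
  (forall x x', (x < nX)%nat -> (x' < nX)%nat ->
     kl_finite nY P x x' /\ kl nY P x x' <= B) ->
  (exists x x', (x < nX)%nat /\ (x' < nX)%nat /\ kl nY P x x' = B) ->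
  forall (ys : list nat),
    valid_outputs nY ys ->
    0 < pY M P enc ys ->
    sumn nY (fun y =>
      (pY M P enc (ys ++ y :: nil) / pY M P enc ys) *
      (ln (condH M P enc ys) - ln (condH M P enc (ys ++ y :: nil)))) <= B.
Proof.
  intros [HnX [HP0 HP1]] HM Henc HKL _ ys Hys HQ.
  set (Q := pY M P enc ys) in *.
  set (p := fun w => post M P enc w ys).
  set (L := fun w y => P (enc w ys) y).
  assert (Hpj : forall w, (w < M)%nat -> 0 <= pjoint M P enc w ys).
  { intros w Hw. unfold pjoint. apply Rmult_le_pos.
    left; apply Rinv_0_lt_compat, lt_0_INR; lia.
    apply prodn_nonneg. intros i Hi. apply HP0. apply Henc; auto.
    apply Hys. apply nth_In; auto. }
  assert (Hp0 : forall w, (w < M)%nat -> 0 <= p w).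
  { intros w Hw. unfold p, post. apply Rdiv_le_0_compat; auto. }
  assert (Hp1 : sumn M p = 1).
  { unfold p, post. rewrite (sumn_ext M _ (fun w => / Q * pjoint M P enc w ys)) by (intros; fold Q; unfold Rdiv; ring).
    rewrite sumn_scal. fold (pY M P enc ys). fold Q. field. lra. }
  assert (HB : 0 <= B).
  { assert (H0 : (enc 0%nat ys < nX)%nat) by (apply Henc; lia).
    destruct (HKL _ _ H0 H0) as [_ Hk].
    assert (kl nY P (enc 0%nat ys) (enc 0%nat ys) = 0).
    { unfold kl. transitivity (sumn nY (fun _ => 0)); [|apply sumn_const0]. apply sumn_ext. intros. apply (Kt_self (P (enc 0%nat ys) i)). }
    lra. }
  pose proof (abs_main M nY p L B Hp0 Hp1
    ltac:(intros w y Hw Hy; apply HP0; auto)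
    ltac:(intros w Hw; apply HP1; auto)
    ltac:(intros w v y Hw Hv Hy; apply (proj1 (HKL (enc w ys) (enc v ys) (Henc w ys Hw) (Henc v ys Hv))); auto)
    ltac:(intros w v Hw Hv; exact (proj2 (HKL (enc w ys) (enc v ys) (Henc w ys Hw) (Henc v ys Hv))))
    HB) as Hmain.
  eapply Rle_trans; [|exact Hmain]. right.
  apply sumn_ext. intros y Hy.
  assert (HS : pY M P enc (ys ++ y :: nil) = sumn M (fun w => pjoint M P enc w ys * L w y)).
  { unfold pY. apply sumn_ext. intros. rewrite pjoint_snoc. reflexivity. }
  assert (Hq : qA M p L y = pY M P enc (ys ++ y :: nil) / Q).
  { unfold qA, p, post. rewrite HS.
    rewrite (sumn_ext M _ (fun w => / Q * (pjoint M P enc w ys * L w y))) by (intros; fold Q; unfold Rdiv; ring).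
    rewrite sumn_scal. unfold Rdiv. ring. }
  rewrite <- Hq. f_equal.
  assert (HE : condH M P enc ys = Ent M p) by reflexivity.
  rewrite HE. f_equal. f_equal.
  unfold condH, Ent. f_equal. apply sumn_ext. intros w Hw.
  assert (Hv : post M P enc w (ys ++ y :: nil) = postA M p L y w).
  { unfold postA. rewrite Hq. unfold post at 1. rewrite pjoint_snoc, HS.
    unfold p, post. fold Q.
    destruct (Req_dec (sumn M (fun w => pjoint M P enc w ys * L w y)) 0) as [Z|Z].
    - rewrite Z. unfold Rdiv. rewrite Rmult_0_l, !Rinv_0. ring.
    - change (L w y) with (P (enc w ys) y). field. split; lra. }
  cbv zeta. rewrite Hv. reflexivity.
Qed.
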